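(* In the Haechi protocol (described in the context), assume the beacon shard has fewer than one third Byzantine nodes. For any two OTXs $OTX^1$ and $OTX^2$ received by the beacon chain, contained in CrossLinks $CL_1$ and $CL_2$ respectively, if either (i) $CL_1.blockTS < CL_2.blockTS$, or (ii) $CL_1 = CL_2$ and $f_{idx}(OTX^1) < f_{idx}(OTX^2)$, then Haechi orders $OTX^1$ before $OTX^2$ in the ordering phase (even if the beacon chain's leader is malicious).
   Context: Setting (Haechi). A sharded blockchain has shards $S_1,\dots,S_m$; shard $S_i$ maintains a chain $SC_i$ of blocks, $SC_i^h$ being the block at height $h$. Each block carries a publicly verifiable block timestamp, strictly increasing in block height within each shard. A beacon shard $S_0$ maintains a beacon chain via a leader-based BFT consensus. Transactions calling order-sensitive contracts are called OTXs. When shard $S_i$ handles its block at height $h$, it puts the valid new OTXs of the block, in in-block order, into a list $L_{tx}$ and sends the beacon chain a certified CrossLink $CL=\langle blockTS, L_{tx}, i, h\rangle$. $f_{idx}(\cdot)$ returns the index of a transaction within its block/CrossLink. Ordering phase: the beacon chain keeps for each shard $i$ a sequence $shardCLs[i]$ of received CrossLinks of $S_i$ with consecutive heights (CrossLinks arriving with a height gap are buffered until the gap is filled); $shardLastTS[i]$ is the timestamp of the last CrossLink in $shardCLs[i]$. Once every $shardCLs[i]$ is nonempty, an ordering cycle selects all CrossLinks in $shardCLs$ with $blockTS\le\min_i shardLastTS[i]$ and orders their OTXs by smaller block timestamp first, then by smaller index within the same CrossLink; the proposed order is accepted only through the beacon shard's BFT consensus, whose honest nodes check these rules. *)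

(* Defs.v *)
From mathcomp Require Import all_boot.
Set Implicit Arguments. Unset Strict Implicit. Unset Printing Implicit Defensive.

Record CrossLink (Tx : Type) := mkCL {
  blockTS : nat;
  ltx : seq Tx;       (* valid new OTXs of the block, in in-block order *)
  sid : nat;
  hgt : nat
}.

(* Shard chains: [chain i h] is the CrossLink of block SC_i^h (heights start at 0);
   timestamps strictly increase with height. *)
Definition shard_chains_ok (Tx : Type) (chain : nat -> nat -> CrossLink Tx) : Prop :=
  (forall i h, sid (chain i h) = i /\ hgt (chain i h) = h) /\
  (forall i h, blockTS (chain i h) < blockTS (chain i h.+1)).

(* An OTX is identified by (shard, height, index within the CrossLink), i.e. by
   its CrossLink (chain i h) and f_idx = k. *)
Definition otx := (nat * nat * nat)%type.

(* Beacon-chain state of the ordering phase.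
   recv : (shard, height) of every CrossLink received so far (in arrival order);
   done i : number of CrossLinks of shard i already removed from shardCLs[i]
            by previous ordering cycles (heights 0 .. done i - 1);
   log : the (accepted) global order of OTXs produced so far. *)
Record State := mkState {
  recv : seq (nat * nat);
  done : nat -> nat;
  log : seq otx
}.

Definition init_state : State := mkState [::] (fun _ => 0) [::].

Fixpoint run (p : nat -> bool) (start fuel : nat) : nat :=
  match fuel with
  | 0 => 0
  | f.+1 => if p start then (run p start.+1 f).+1 else 0
  end.

Section Haechi.
Variables (Tx : Type) (m : nat) (chain : nat -> nat -> CrossLink Tx).

(* shardCLs[i] consists of the received CrossLinks of S_i with consecutive
   heights done i, done i + 1, ..., done i + cnt s i - 1; CrossLinks received
   with a height gap stay buffered (in recv) until the gap is filled. *)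
Definition cnt (s : State) (i : nat) : nat :=
  run (fun h => (i, h) \in recv s) (done s i) (size (recv s)).

Definition shardCLs_heights (s : State) (i : nat) : seq nat :=
  iota (done s i) (cnt s i).

Definition shardLastTS (s : State) (i : nat) : nat :=
  blockTS (chain i (done s i + cnt s i).-1).

Definition minLastTS (s : State) : nat :=
  foldr minn (shardLastTS s 0) [seq shardLastTS s i | i <- iota 0 m].

Definition selH (s : State) (i : nat) : seq nat :=
  [seq h <- shardCLs_heights s i | blockTS (chain i h) <= minLastTS s].

Definition selOTX (s : State) : seq otx :=
  flatten [seq [seq (ih.1, ih.2, k) | k <- iota 0 (size (ltx (chain ih.1 ih.2)))]
          | ih <- [seq (i, h) | i <- iota 0 m, h <- selH s i]].

Definition prec (x y : otx) : bool :=
  (blockTS (chain x.1.1 x.1.2) < blockTS (chain y.1.1 y.1.2))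
  || ((x.1 == y.1) && (x.2 < y.2)).

Definition valid_proposal (s : State) (prop : seq otx) : bool :=
  [&& all (fun i => 0 < cnt s i) (iota 0 m),
      perm_eq prop (selOTX s)
    & pairwise (fun x y => ~~ prec y x) prop].

Variables (N : nat) (byz : {set 'I_N}).

(* Protocol steps: receipt of a certified CrossLink of some shard, or an
   ordering cycle whose (possibly malicious) leader's proposal is accepted by
   BFT consensus: a quorum of more than 2N/3 nodes voted for it, and an honest
   node votes only for a proposal passing the honest check. *)
Inductive step : State -> State -> Prop :=
| StepRecv (s : State) (i h : nat) :
    i < m -> step s (mkState ((i, h) :: recv s) (done s) (log s))
| StepCycle (s : State) (prop : seq otx) (Q : {set 'I_N}) :
    2 * N < 3 * #|Q| ->
    (forall v, v \in Q -> v \notin byz -> valid_proposal s prop) ->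
    step s (mkState (recv s) (fun i => done s i + size (selH s i)) (log s ++ prop)).

Inductive reachable : State -> Prop :=
| ReachInit : reachable init_state
| ReachStep s s' : reachable s -> step s s' -> reachable s'.

End Haechi.

(* Main.v *)
Require Import Defs.
From mathcomp Require Import all_boot.
From mathcomp Require Import zify.
Set Implicit Arguments. Unset Strict Implicit. Unset Printing Implicit Defensive.

Section H.
Variables (Tx : Type) (m : nat) (chain : nat -> nat -> CrossLink Tx) (N : nat) (byz : {set 'I_N}).
Hypothesis Hc : shard_chains_ok chain.
Hypothesis Hb : 3 * #|byz| < N.

Lemma ts_mono i h h' : h < h' -> blockTS (chain i h) < blockTS (chain i h').
Proof.
elim: h' => // h' IH; rewrite ltnS leq_eqVlt => /orP[/eqP->|/IH H].
  exact: (proj2 Hc).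
exact: ltn_trans H (proj2 Hc i h').
Qed.

Lemma ts_le i h h' : blockTS (chain i h) <= blockTS (chain i h') -> h <= h'.
Proof.
move=> H; rewrite leqNgt; apply/negP=> /(ts_mono i) lt.
by rewrite ltnNge H in lt.
Qed.

Lemma filter_iota_prefix (p : pred nat) : (forall j, p j.+1 -> p j) ->
  forall c d, filter p (iota d c) = iota d (size (filter p (iota d c))).
Proof.
move=> pd; have allf: forall d, ~~ p d -> forall j, d <= j -> ~~ p j.
  move=> d npd j; elim: j => [|j IH]; first by rewrite leqn0 => /eqP<-.
  rewrite leq_eqVlt => /orP[/eqP<-//|]; rewrite ltnS => /IH; apply: contra; exact: pd.
elim=> [|c IH] d //=.
case: ifP => pdT /=; first by rewrite -IH.
have: all (predC p) (iota d.+1 c).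
  by apply/allP=> j; rewrite mem_iota => /andP[lo _]; apply: allf (negbT pdT) j (ltnW lo).
by rewrite all_predC has_filter negbK => /eqP->.
Qed.

Lemma selH_iota s i : selH m chain s i = iota (done s i) (size (selH m chain s i)).
Proof.
rewrite /selH /shardCLs_heights; apply: filter_iota_prefix => j /= H.
exact: leq_trans (ltnW (ts_mono i (ltnSn j))) H.
Qed.

Lemma mem_selH s i h : (h \in selH m chain s i) = (done s i <= h < done s i + size (selH m chain s i)).
Proof. by rewrite {1}selH_iota mem_iota. Qed.

Lemma minLast_le s i : i < m -> minLastTS m chain s <= shardLastTS chain s i.
Proof.
move=> im; rewrite /minLastTS.
have: shardLastTS chain s i \in [seq shardLastTS chain s i | i <- iota 0 m].
  by apply: map_f; rewrite mem_iota.
elim: [seq _ | _ <- _] => //= a l IH; rewrite in_cons => /orP[/eqP<-|/IH H].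
  exact: geq_minl.
exact: leq_trans (geq_minr _ _) H.
Qed.

Lemma sel_cover s i h : i < m -> 0 < cnt s i -> blockTS (chain i h) <= minLastTS m chain s ->
  h < done s i \/ h \in selH m chain s i.
Proof.
move=> im cp hle; case: (ltnP h (done s i)) => hd; [by left| right].
rewrite /selH mem_filter /= hle /= /shardCLs_heights mem_iota hd /=.
move: (leq_trans hle (minLast_le s im)); rewrite /shardLastTS => /ts_le.
by rewrite -ltnS prednK // addn_gt0 cp orbT.
Qed.

Lemma mem_selOTX s x : x \in selOTX m chain s ->
  [/\ x.1.1 < m, x.1.2 \in selH m chain s x.1.1 & x.2 < size (ltx (chain x.1.1 x.1.2))].
Proof.
rewrite /selOTX => /flattenP [l /mapP [ih /allpairsPdep [i [h [im hs ->]]] ->]].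
move=> /mapP [k]; rewrite mem_iota add0n => /andP [_ kl] ->.
by move: im; rewrite mem_iota add0n /= => ->; rewrite hs kl.
Qed.

Lemma selOTX_mem s i h k : i < m -> h \in selH m chain s i ->
  k < size (ltx (chain i h)) -> (i, h, k) \in selOTX m chain s.
Proof.
move=> im hs kl; rewrite /selOTX; apply/flattenP.
exists [seq (i, h, k) | k <- iota 0 (size (ltx (chain i h)))].
  apply/mapP; exists (i, h) => //; apply/allpairsPdep; exists i, h.
  by rewrite mem_iota add0n im hs.
by apply/mapP; exists k => //; rewrite mem_iota.
Qed.

Lemma honest s prop (Q : {set 'I_N}) : 2 * N < 3 * #|Q| ->
  (forall v, v \in Q -> v \notin byz -> valid_proposal m chain s prop) ->
  valid_proposal m chain s prop.
Proof.
move=> HQ Hv; case: (boolP (Q \subset byz)) => [sub|/subsetPn [v vQ vb]]; last exact: Hv v vQ vb.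
have := subset_leq_card sub; lia.
Qed.


Lemma pw_idx (r : rel otx) s x y : pairwise r s -> x \in s -> y \in s ->
  index y s < index x s -> r y x.
Proof.
move=> /(pairwiseP x) P xs ys lt.
have := P (index y s) (index x s); rewrite !inE !index_mem nth_index // nth_index //.
by move=> H; apply: H.
Qed.

Lemma prec_irr x : prec chain x x = false.
Proof. by rewrite /prec ltnn eqxx ltnn. Qed.

Lemma prec_le x y : prec chain x y ->
  blockTS (chain x.1.1 x.1.2) <= blockTS (chain y.1.1 y.1.2).
Proof. by rewrite /prec => /orP[/ltnW //| /andP[/eqP-> _]]. Qed.

Definition Inv (s : State) : Prop :=
  [/\ (forall i h, (i, h) \in recv s -> i < m),
      (forall i h k, i < m -> h < done s i -> k < size (ltx (chain i h)) -> (i, h, k) \in log s),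
      (forall x, x \in log s -> forall i h, i < m ->
          blockTS (chain i h) <= blockTS (chain x.1.1 x.1.2) -> h < done s i)
    & (forall x y, y \in log s -> prec chain x y -> x.1.1 < m ->
          x.2 < size (ltx (chain x.1.1 x.1.2)) -> index x (log s) < index y (log s))].

Lemma sel_ts s x : x \in selOTX m chain s -> blockTS (chain x.1.1 x.1.2) <= minLastTS m chain s.
Proof. by case/mem_selOTX => _; rewrite /selH mem_filter => /andP[]. Qed.

Lemma inv_reach s0 : reachable m chain byz s0 -> Inv s0.
Proof.
elim=> [|s s' _ [IA IB IC ID] st]; first by split=> //.
case: s s' / st IA IB IC ID => [s i h im|s prop Q HQ Hv] IA IB IC ID.
  split=> //= i' h'; rewrite in_cons => /orP[/eqP[-> _] //|]; exact: IA.
have := honest HQ Hv; case/and3P => /allP Hcnt Hperm Hpw.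
have inprop x : x \in prop -> x \in selOTX m chain s by rewrite (perm_mem Hperm).
have cover i h : i < m -> blockTS (chain i h) <= minLastTS m chain s ->
    h < done s i \/ h \in selH m chain s i.
  move=> im; apply: sel_cover => //; apply: Hcnt; by rewrite mem_iota.
have selprop i h k : i < m -> h \in selH m chain s i -> k < size (ltx (chain i h)) ->
    (i, h, k) \in prop.
  by move=> im hs kl; rewrite (perm_mem Hperm); apply: selOTX_mem.
split=> //=.
- move=> i h k im hd kl; rewrite mem_cat.
  case: (ltnP h (done s i)) => hd'; first by rewrite IB.
  by rewrite selprop ?orbT // mem_selH hd' hd.
- move=> x; rewrite mem_cat => /orP[xl|xp] i h im hle.
    exact: leq_trans (IC x xl i h im hle) (leq_addr _ _).
  have := cover i h im (leq_trans hle (sel_ts (inprop x xp))).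
  case=> [hd|]; first exact: leq_trans hd (leq_addr _ _).
  by rewrite mem_selH => /andP[].
- move=> [[i h] k] y; rewrite mem_cat (index_cat y) => yin pxy im kl.
  case: ifP => yl.
    have lt := ID (i, h, k) y yl pxy im kl.
    have xl : (i, h, k) \in log s.
      by rewrite -index_mem; apply: leq_trans lt (index_size _ _).
    by rewrite (index_cat (i, h, k)) xl.
  rewrite yl /= in yin.
  rewrite (index_cat (i, h, k)); case: ifP => xl; first by apply: leq_trans (leq_addr _ _) ; rewrite ?index_mem ?xl.
  rewrite ltn_add2l.
  have xp : (i, h, k) \in prop.
    have := cover i h im (leq_trans (prec_le pxy) (sel_ts (inprop y yin))).
    case=> [hd|hs]; last exact: selprop.
    by rewrite IB in xl.
  rewrite ltnNge; apply/negP; rewrite leq_eqVlt => /orP[/eqP e|lt].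
    have := nth_index (i, h, k) xp; rewrite -e nth_index // => exy.
    by rewrite exy prec_irr in pxy.
  by have := pw_idx Hpw xp yin lt; rewrite pxy.
Qed.

End H.

Theorem lemma2 (Tx : Type) (m : nat) (chain : nat -> nat -> CrossLink Tx)
    (N : nat) (byz : {set 'I_N}) :
  shard_chains_ok chain ->
  3 * #|byz| < N ->
  forall s : State, reachable m chain byz s ->
  forall (i1 h1 k1 i2 h2 k2 : nat),
    (i1, h1) \in recv s -> (i2, h2) \in recv s ->
    k1 < size (ltx (chain i1 h1)) -> k2 < size (ltx (chain i2 h2)) ->
    (blockTS (chain i1 h1) < blockTS (chain i2 h2) \/
     ((i1, h1) = (i2, h2) /\ k1 < k2)) ->
    (i2, h2, k2) \in log s ->
    (i1, h1, k1) \in log s /\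
    index (i1, h1, k1) (log s) < index (i2, h2, k2) (log s).
Proof.
move=> Hc Hb s Hr i1 h1 k1 i2 h2 k2 r1 _ kl1 _ Hp yl.
have [IA _ _ ID] := inv_reach Hc Hb Hr.
have pxy : prec chain (i1, h1, k1) (i2, h2, k2).
  rewrite /prec /=; case: Hp => [->//|[e lt]]; by rewrite e eqxx lt orbT.
have lt := ID (i1, h1, k1) (i2, h2, k2) yl pxy (IA _ _ r1) kl1.
split=> //; rewrite -index_mem; exact: leq_trans lt (index_size _ _).
Qed.
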